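(* Let $\mathbb O'_+=\{x\in\mathbb O':|x|^2>0\}$ and $\mathcal U=U_1\cup U_2\cup U_3\subset\mathbb O'^3$ with $U_1=\{(1,y,z):1+|y|^2+|z|^2>0\}$, $U_2=\{(x,1,z):|x|^2+1+|z|^2>0\}$, $U_3=\{(x,y,1):|x|^2+|y|^2+1>0\}$. The relation on $\mathcal U$ given by $[a,b,c]\sim[d,e,f]$ iff there exists $\lambda\in\mathbb O'_+$ with $a=d\lambda$, $b=e\lambda$, $c=f\lambda$ is an equivalence relation.
   Context: The para-octonions $\mathbb O'$ are $\mathbb H\oplus\mathbb H$ with multiplication $(q_1,q_2)(p_1,p_2)=(q_1p_1+\bar p_2q_2,\ p_2q_1+q_2\bar p_1)$, unit $(1,0)$, conjugation $\overline{(q_1,q_2)}=(\bar q_1,-q_2)$, inner product $\langle a,b\rangle=\mathrm{Re}(a\bar b)$ (real part of the first quaternion component) and $|a|^2=\langle a,a\rangle=|q_1|^2-|q_2|^2$ for $a=(q_1,q_2)$; this form has signature $(4,4)$ and satisfies $|ab|^2=|a|^2|b|^2$. *)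

(* Defs.v *)
From Stdlib Require Import Reals.
Open Scope R_scope.

Record quat : Type := Quat { qa : R; qb : R; qc : R; qd : R }.

Definition qadd (p q : quat) : quat :=
  Quat (qa p + qa q) (qb p + qb q) (qc p + qc q) (qd p + qd q).

Definition qmul (p q : quat) : quat :=
  Quat (qa p * qa q - qb p * qb q - qc p * qc q - qd p * qd q)
       (qa p * qb q + qb p * qa q + qc p * qd q - qd p * qc q)
       (qa p * qc q - qb p * qd q + qc p * qa q + qd p * qb q)
       (qa p * qd q + qb p * qc q - qc p * qb q + qd p * qa q).

Definition qconj (p : quat) : quat := Quat (qa p) (- qb p) (- qc p) (- qd p).
Definition qopp (p : quat) : quat := Quat (- qa p) (- qb p) (- qc p) (- qd p).
Definition qre (p : quat) : R := qa p.
Definition qone : quat := Quat 1 0 0 0.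
Definition qzero : quat := Quat 0 0 0 0.

(** Para-octonions O' = H (+) H. *)
Record poct : Type := POct { pf : quat; ps : quat }.

Definition omul (x y : poct) : poct :=
  POct (qadd (qmul (pf x) (pf y)) (qmul (qconj (ps y)) (ps x)))
       (qadd (qmul (ps y) (pf x)) (qmul (ps x) (qconj (pf y)))).

Definition oone : poct := POct qone qzero.

Definition oconj (x : poct) : poct := POct (qconj (pf x)) (qopp (ps x)).

Definition oinner (a b : poct) : R := qre (pf (omul a (oconj b))).

(** |a|^2 = <a,a>  (= |q1|^2 - |q2|^2). *)
Definition onorm2 (a : poct) : R := oinner a a.

Definition opos (l : poct) : Prop := 0 < onorm2 l.

Definition U1 (t : poct * poct * poct) : Prop :=
  let '(x, y, z) := t in x = oone /\ 1 + onorm2 y + onorm2 z > 0.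
Definition U2 (t : poct * poct * poct) : Prop :=
  let '(x, y, z) := t in y = oone /\ onorm2 x + 1 + onorm2 z > 0.
Definition U3 (t : poct * poct * poct) : Prop :=
  let '(x, y, z) := t in z = oone /\ onorm2 x + onorm2 y + 1 > 0.

Definition Uset (t : poct * poct * poct) : Prop := U1 t \/ U2 t \/ U3 t.

Definition prel (t s : poct * poct * poct) : Prop :=
  let '(a, b, c) := t in let '(d, e, f) := s in
  exists l : poct, opos l /\ a = omul d l /\ b = omul e l /\ c = omul f l.

(* Main.v *)
Require Import Defs.
From Stdlib Require Import Reals.
From Stdlib Require Import Lra.
Open Scope R_scope.

Definition qsc (c : R) (p : quat) : quat := Quat (c * qa p) (c * qb p) (c * qc p) (c * qd p).
Definition osc (c : R) (x : poct) : poct := POct (qsc c (pf x)) (qsc c (ps x)).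

Lemma quat_ext (p q : quat) : qa p = qa q -> qb p = qb q -> qc p = qc q -> qd p = qd q -> p = q.
Proof. destruct p, q; simpl; intros; subst; reflexivity. Qed.
Lemma poct_ext (x y : poct) : pf x = pf y -> ps x = ps y -> x = y.
Proof. destruct x, y; simpl; intros; subst; reflexivity. Qed.

Ltac dpo x := let a1 := fresh "r" in let a2 := fresh "r" in let a3 := fresh "r" in let a4 := fresh "r" in
  let b1 := fresh "r" in let b2 := fresh "r" in let b3 := fresh "r" in let b4 := fresh "r" in
  destruct x as [[a1 a2 a3 a4] [b1 b2 b3 b4]].
Ltac solve_eq := apply poct_ext; apply quat_ext;
  cbv beta iota delta [omul qadd qmul qconj oconj qopp osc qsc onorm2 oinner qre oone qone qzero pf ps qa qb qc qd]; ring.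
Ltac solve_r :=
  cbv beta iota delta [omul qadd qmul qconj oconj qopp osc qsc onorm2 oinner qre oone qone qzero pf ps qa qb qc qd]; ring.

Lemma I1l x : omul oone x = x. Proof. dpo x; solve_eq. Qed.
Lemma I1r x : omul x oone = x. Proof. dpo x; solve_eq. Qed.
Lemma I2 x l : omul (omul x l) (oconj l) = osc (onorm2 l) x. Proof. dpo x; dpo l; solve_eq. Qed.
Lemma I3 x l : omul (oconj l) (omul l x) = osc (onorm2 l) x. Proof. dpo x; dpo l; solve_eq. Qed.
Lemma I4l c x y : omul (osc c x) y = osc c (omul x y). Proof. dpo x; dpo y; solve_eq. Qed.
Lemma I4r c x y : omul x (osc c y) = osc c (omul x y). Proof. dpo x; dpo y; solve_eq. Qed.
Lemma I5 a b : oconj (omul a b) = omul (oconj b) (oconj a). Proof. dpo a; dpo b; solve_eq. Qed.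
Lemma I6 y : omul (oconj y) y = osc (onorm2 y) oone. Proof. dpo y; solve_eq. Qed.
Lemma I7 a b : onorm2 (omul a b) = onorm2 a * onorm2 b. Proof. dpo a; dpo b; solve_r. Qed.
Lemma I8 a b x : osc a (osc b x) = osc (a*b) x. Proof. dpo x; solve_eq. Qed.
Lemma I8' x : osc 1 x = x. Proof. dpo x; solve_eq. Qed.
Lemma I9 c x : onorm2 (osc c x) = c * c * onorm2 x. Proof. dpo x; solve_r. Qed.
Lemma I10 x : onorm2 (oconj x) = onorm2 x. Proof. dpo x; solve_r. Qed.
Lemma I11 x : omul oone x = x. Proof. apply I1l. Qed.

Lemma osc_cancel c x y : c <> 0 -> osc c x = osc c y -> x = y.
Proof.
  intros Hc H. rewrite <- (I8' x), <- (I8' y).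
  replace 1 with (/c * c) by (field; auto).
  rewrite <- !I8, H. reflexivity.
Qed.

Definition good (m l x : poct) := omul (omul x m) l = omul x (omul m l).

Lemma Lb m l x : onorm2 m <> 0 -> omul x m = oone -> good m l x.
Proof.
  intros Hm H. unfold good. rewrite H, I1l.
  assert (E : osc (onorm2 m) x = oconj m) by (rewrite <- I2, H, I1l; reflexivity).
  apply (osc_cancel (onorm2 m)); auto.
  rewrite <- I4l, E, I3. reflexivity.
Qed.

Lemma Lc m l x : onorm2 m <> 0 -> onorm2 l <> 0 -> omul (omul x m) l = oone -> omul x (omul m l) = oone.
Proof.
  intros Hm Hl H.
  assert (E1 : osc (onorm2 l) (omul x m) = oconj l) by (rewrite <- I2, H, I1l; reflexivity).
  assert (E2 : osc (onorm2 l * onorm2 m) x = oconj (omul m l)).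
  { rewrite <- I8, <- (I2 x m), <- (I4l (onorm2 l) (omul x m) (oconj m)), E1, I5. reflexivity. }
  apply (osc_cancel (onorm2 l * onorm2 m)). apply Rmult_integral_contrapositive; auto.
  rewrite <- I4l, E2, I6, I7. f_equal; ring.
Qed.

Lemma Ld m l x : onorm2 m <> 0 -> omul m l = oone -> good m l x.
Proof.
  intros Hm H. unfold good. rewrite H, I1r.
  assert (E : osc (onorm2 m) l = oconj m) by (rewrite <- I3, H, I1r; reflexivity).
  apply (osc_cancel (onorm2 m)); auto.
  rewrite <- I4r, E, I2. reflexivity.
Qed.

Lemma opos_ne l : opos l -> onorm2 l <> 0.
Proof. unfold opos; lra. Qed.


Lemma good_one m l : good m l oone.
Proof. unfold good. rewrite !I1l. reflexivity. Qed.
Lemma good_m1 l x : good oone l x.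
Proof. unfold good. rewrite I1r, I1l. reflexivity. Qed.
Lemma good_l1 m x : good m oone x.
Proof. unfold good. rewrite !I1r. reflexivity. Qed.
Lemma Lc' m l x : onorm2 m <> 0 -> onorm2 l <> 0 -> omul (omul x m) l = oone -> good m l x.
Proof. intros. unfold good. rewrite H1. symmetry. apply Lc; auto. Qed.

Lemma norm_one : onorm2 oone = 1.
Proof. solve_r. Qed.

Lemma trans_core m l g h k :
  onorm2 m <> 0 -> onorm2 l <> 0 ->
  (omul (omul g m) l = oone \/ omul (omul h m) l = oone \/ omul (omul k m) l = oone) ->
  (omul g m = oone \/ omul h m = oone \/ omul k m = oone) ->
  (g = oone \/ h = oone \/ k = oone) ->
  good m l g /\ good m l h /\ good m l k.
Proof.
  intros Hm Hl Ht Hs Hu.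
  destruct Hu as [Hu|[Hu|Hu]]; destruct Hs as [Hs|[Hs|Hs]]; destruct Ht as [Ht|[Ht|Ht]];
  try (rewrite Hs, I1l in Ht; subst l; repeat split; apply good_l1);
  subst; rewrite ?I1l in *; try (subst m; repeat split; apply good_m1);
  try (repeat split; apply Ld; assumption);
  repeat split;
  first [ apply good_one | apply Lb; assumption | apply Lc'; assumption ].
Qed.

Theorem lemma6p1 :
  (forall t, Uset t -> prel t t) /\
  (forall t s, Uset t -> Uset s -> prel t s -> prel s t) /\
  (forall t s u, Uset t -> Uset s -> Uset u -> prel t s -> prel s u -> prel t u).
Proof.
  split; [|split].
  - intros [[a b] c] _. exists oone. unfold opos. rewrite norm_one, !I1r.
    repeat split; lra.
  - intros [[a b] c] [[d e] f] _ _ [l [Hl [Ha [Hb Hc]]]].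
    subst a b c.
    assert (HN : onorm2 l <> 0) by (apply opos_ne; assumption).
    exists (osc (/ onorm2 l) (oconj l)). split.
    + unfold opos in *. rewrite I9, I10.
      assert (0 < / onorm2 l) by (apply Rinv_0_lt_compat; assumption).
      apply Rmult_lt_0_compat; [apply Rmult_lt_0_compat|]; assumption.
    + assert (K : forall x, x = omul (omul x l) (osc (/ onorm2 l) (oconj l))).
      { intro x. rewrite I4r, I2, I8, Rinv_l, I8'; auto. }
      repeat split; apply K.
  - intros [[a b] c] [[d e] f] [[g h] k] Ut Us Uu [l [Hl [Ha [Hb Hc]]]] [m [Hm [Hd [He Hf]]]].
    subst a b c d e f.
    exists (omul m l). split.
    + unfold opos in *. rewrite I7. apply Rmult_lt_0_compat; assumption.
    + cut (good m l g /\ good m l h /\ good m l k). { unfold good. tauto. }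
      apply trans_core; try (apply opos_ne; assumption).
      * unfold Uset, U1, U2, U3 in Ut. tauto.
      * unfold Uset, U1, U2, U3 in Us. tauto.
      * unfold Uset, U1, U2, U3 in Uu. tauto.
Qed.
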